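(* Let $n\ge 2$ be an integer, $p,q\in\mathbb{R}$ with $q>0$, and let $M$ be a real $n\times n$ matrix such that each of the numbers $p, p+q, \dots, p+(n-1)q$ appears exactly $n$ times among the entries of $M$. Set $$r := \frac pq + \frac{n-1}{2},\quad \rho := \frac{n+1}{12},\quad \sigma := nq^2\left(r^2 + \frac{n^2-1}{12}\right).$$ Then: if $r^2 < \rho$: $|\det M| \le \sigma^{n/2}$; if $r^2 = \rho$: $|\det M| \le n^n q^n |r| \rho^{\frac{n-1}{2}} = \sigma^{n/2}$; if $r^2 > \rho$: $|\det M| \le n^n q^n |r| \rho^{\frac{n-1}{2}} < \sigma^{n/2}$. *)

(* Defs.v *)
(* Real numbers are modelled by an arbitrary real closed field
   R : rcfType; real powers x^(k/2) with x >= 0 are written (Num.sqrt x) ^+ k. *)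
From HB Require Import structures.
From mathcomp Require Import all_boot all_order all_algebra.
Set Implicit Arguments. Unset Strict Implicit. Unset Printing Implicit Defensive.
Import Order.TTheory GRing.Theory Num.Theory.
Local Open Scope ring_scope.

Definition r_of (R : rcfType) (n : nat) (p q : R) : R :=
  p / q + (n%:R - 1) / 2%:R.
Definition rho_of (R : rcfType) (n : nat) : R := (n%:R + 1) / 12%:R.
Definition sigma_of (R : rcfType) (n : nat) (p q : R) : R :=
  n%:R * q ^+ 2 * (r_of n p q ^+ 2 + (n%:R ^+ 2 - 1) / 12%:R).
Definition bound_of (R : rcfType) (n : nat) (p q : R) : R :=
  n%:R ^+ n * q ^+ n * `|r_of n p q| * (Num.sqrt (rho_of R n)) ^+ n.-1.

(* Main.v *)
Require Import Defs.
From HB Require Import structures.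
From mathcomp Require Import all_boot all_order all_algebra.
From mathcomp Require Import ring lra.
Import Order.TTheory GRing.Theory Num.Theory.
Local Open Scope ring_scope.


Lemma gram_diag (R : realFieldType) m n (X : 'M[R]_(m,n)) j :
  (X^T *m X) j j = \sum_i X i j ^+ 2.
Proof. by rewrite mxE; apply: eq_bigr => i _; rewrite mxE expr2. Qed.

Lemma gram_diag_ge0 (R : realFieldType) m n (X : 'M[R]_(m,n)) j :
  0 <= (X^T *m X) j j.
Proof. by rewrite gram_diag; apply: sumr_ge0 => i _; apply: sqr_ge0. Qed.

Lemma gram_hadamard (R : realFieldType) m n (A : 'M[R]_(m, n)) :
  \det (A^T *m A) <= \prod_(j < n) (A^T *m A) j j.
Proof.
elim: n A => [|n IH] A; first by rewrite det_mx00 big_ord0.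
rewrite -[A](hsubmxK (A : 'M_(m, 1 + n))).
move: (lsubmx _) (rsubmx _) => a B.
pose c := (a^T *m a) 0 0.
have ac : a^T *m a = c%:M by apply/matrixP => i j; rewrite !ord1 [RHS]mxE eqxx mulr1n.
pose w := c^-1 *: (a^T *m B).
pose B' := B - a *m w.
have aB' : a^T *m B' = 0.
  have [c0|c0] := eqVneq c 0.
    have a0 : a = 0.
      apply/matrixP => i j; rewrite ord1 mxE.
      move: c0; rewrite /c gram_diag => /eqP; rewrite psumr_eq0; last by move=> k _; apply: sqr_ge0.
      by move/allP/(_ i (mem_index_enum _)); rewrite sqrf_eq0 => /eqP.
    by rewrite a0 trmx0 !mul0mx.
  by rewrite /B' mulmxBr mulmxA ac /w scalemxAr mul_scalar_mx -scalemxAr scalerA mulfV // scale1r subrr.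
pose U : 'M[R]_(1 + n) := block_mx 1%:M (- w) 0 1%:M.
have AU : row_mx a B *m U = row_mx a B'.
  by rewrite /U mul_row_block !mulmx1 !mulmx0 addr0 mulmxN addrC.
have detU : \det U = 1 by rewrite det_ublock !det1 mulr1.
have e1 : \det ((row_mx a B)^T *m row_mx a B) = \det ((row_mx a B')^T *m row_mx a B').
  rewrite -AU trmx_mul.
  have -> : U^T *m (row_mx a B)^T *m (row_mx a B *m U) = U^T *m ((row_mx a B)^T *m row_mx a B) *m U by rewrite !mulmxA.
  by rewrite !det_mulmx det_tr detU mulr1 mul1r.
have g' : (row_mx a B')^T *m row_mx a B' = block_mx c%:M 0 0 (B'^T *m B').
  by rewrite tr_row_mx mul_col_row ac aB' -[B'^T *m a]trmxK trmx_mul trmxK aB' trmx0.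
have g : (row_mx a B)^T *m row_mx a B = block_mx c%:M (a^T *m B) (B^T *m a) (B^T *m B).
  by rewrite tr_row_mx mul_col_row ac.
rewrite e1 g' det_ublock det_scalar1.
have -> : \prod_(j < n.+1) ((row_mx a B)^T *m row_mx a B) j j = c * \prod_(j < n) (B^T *m B) j j.
  rewrite (@big_split_ord _ _ _ 1 n) big_ord1 g block_mxEul mxE eqxx mulr1n.
  by congr (_ * _); apply: eq_bigr => j _; rewrite block_mxEdr.
have c0 : 0 <= c by apply: gram_diag_ge0.
apply: ler_wpM2l => //.
apply: le_trans (IH _) _.
apply: ler_prod => j _; rewrite gram_diag_ge0 /=.
have hB : B = B' + a *m w by rewrite /B' subrK.
rewrite [in X in _ <= X]hB !gram_diag.
have aBj : \sum_i a i 0 * B' i j = 0.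
  by move/matrixP: aB' => /(_ 0 j); rewrite !mxE => H; apply: etrans H; apply: eq_bigr => i _; rewrite !mxE.
have aw : forall k, (a *m w) k j = a k 0 * w 0 j by move=> k; rewrite mxE big_ord1.
have -> : \sum_i (B' + a *m w) i j ^+ 2 = \sum_i B' i j ^+ 2 + (w 0 j ^+ 2 * \sum_i a i 0 ^+ 2 + 2 * w 0 j * \sum_i a i 0 * B' i j).
  by rewrite !mulr_sumr -!big_split; apply: eq_bigr => i _ /=; rewrite mxE aw; ring.
rewrite aBj mulr0 addr0 lerDl; apply: mulr_ge0; first exact: sqr_ge0.
by apply: sumr_ge0 => i _; apply: sqr_ge0.
Qed.


Lemma bern (R : realFieldType) k (a b : R) : 0 <= a -> a <= b ->
  a ^+ k.+1 + k.+1%:R * (b - a) * a ^+ k <= b ^+ k.+1.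
Proof.
move=> a0 ab; elim: k => [|k IH]; first by rewrite !expr1 expr0 mulr1 mul1r; lra.
have hb : 0 <= b by apply: le_trans ab.
have hak : 0 <= a ^+ k by apply: exprn_ge0.
rewrite exprS [b ^+ k.+2]exprS.
apply: le_trans (ler_wpM2l hb IH).
rewrite exprS -[(k.+2)%:R]natr1 -[(k.+1)%:R]natr1.
have hk : 0 <= k%:R :> R by apply: ler0n.
have h1 : 0 <= (b - a) by lra.
have h2 : 0 <= (b - a) * (b - a) * a ^+ k by apply: mulr_ge0 => //; apply: mulr_ge0.
have h3 : 0 <= k%:R * ((b - a) * (b - a) * a ^+ k) by apply: mulr_ge0.
nra.
Qed.

Lemma bern_strict (R : realFieldType) k (a b : R) : 0 < a -> a < b ->
  a ^+ k.+2 + k.+2%:R * (b - a) * a ^+ k.+1 < b ^+ k.+2.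
Proof.
move=> a0 ab.
have hb : 0 < b by apply: lt_trans ab.
have IH := bern _ k _ _ (ltW a0) (ltW ab).
have hak : 0 < a ^+ k by apply: exprn_gt0.
rewrite [b ^+ k.+2]exprS.
apply: lt_le_trans (ler_wpM2l (ltW hb) IH).
rewrite !exprS -[(k.+2)%:R]natr1 -[(k.+1)%:R]natr1.
have hk : 0 <= k%:R :> R by apply: ler0n.
have h1 : 0 < (b - a) by lra.
have h2 : 0 < (b - a) * (b - a) * a ^+ k by apply: mulr_gt0 => //; apply: mulr_gt0.
have h3 : 0 <= k%:R * ((b - a) * (b - a) * a ^+ k) by apply: mulr_ge0 => //; apply: ltW.
nra.
Qed.

Lemma mono_g (R : realFieldType) k (X Y F : R) : Y <= X -> F - X <= k.+1%:R * Y ->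
  0 <= F - X -> 0 <= Y -> X * (F - X) ^+ k.+1 <= Y * (F - Y) ^+ k.+1.
Proof.
move=> YX hk a0 Y0.
have hb := bern _ k _ _ a0 (_ : F - X <= F - Y); have /hb {}hb : F - X <= F - Y by lra.
apply: le_trans (ler_wpM2l Y0 hb).
have hak : 0 <= (F - X) ^+ k by apply: exprn_ge0.
have e : F - Y - (F - X) = X - Y by ring.
rewrite e exprS.
have h1 : 0 <= X - Y by lra.
have h2 : 0 <= (X - Y) * (F - X) ^+ k by apply: mulr_ge0.
have h3 : (F - X) * ((X - Y) * (F - X) ^+ k) <= k.+1%:R * Y * ((X - Y) * (F - X) ^+ k).
  by apply: ler_wpM2r.
nra.
Qed.

Lemma cs_sum (R : realFieldType) n (v : 'I_n -> R) :
  (\sum_i v i) ^+ 2 <= n%:R * \sum_i v i ^+ 2.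
Proof.
case: n v => [|n] v; first by rewrite !big_ord0 expr0n /= mul0r.
set N : R := n.+1%:R.
set T := \sum_i v i.
have h : 0 <= \sum_(i < n.+1) (N * v i - T) ^+ 2 by apply: sumr_ge0 => i _; apply: sqr_ge0.
have e : \sum_(i < n.+1) (N * v i - T) ^+ 2 =
   N * (N * \sum_i v i ^+ 2 - T ^+ 2).
  have -> : \sum_(i < n.+1) (N * v i - T) ^+ 2 =
     \sum_(i < n.+1) (N ^+ 2 * v i ^+ 2 + (- (2 * N * T)) * v i + T ^+ 2).
    by apply: eq_bigr => i _; ring.
  rewrite !big_split /= -!mulr_sumr sumr_const card_ord -/T -/N -mulr_natr.
  ring.
rewrite e in h.
rewrite pmulr_rge0 ?ltr0Sn // in h; lra.
Qed.


Lemma count_sum (R : realFieldType) n (p q : R) (hq : q != 0) (M : 'M[R]_n)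
  (hM : forall k : 'I_n, #|[set ij : 'I_n * 'I_n | M ij.1 ij.2 == p + k%:R * q]| = n)
  (f : R -> R) :
  \sum_(ij : 'I_n * 'I_n) f (M ij.1 ij.2) = n%:R * \sum_(k < n) f (p + k%:R * q).
Proof.
pose v := fun k : 'I_n => p + k%:R * q.
have vinj : injective v.
  move=> k k'; rewrite /v => /addrI /(mulIf hq) /eqP; rewrite eqr_nat => /eqP.
  exact: val_inj.
pose K (ij : 'I_n * 'I_n) := [set k | M ij.1 ij.2 == v k].
have K1 : forall ij, (#|K ij| <= 1)%N.
  move=> ij; apply/card_le1_eqP => k k'; rewrite /K !inE => /eqP e1 /eqP e2 /=.
  by apply: vinj; rewrite -e1 -e2.
have cardK : forall ij, #|K ij| = (\sum_k (M ij.1 ij.2 == v k : nat))%N.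
  move=> ij; rewrite -sum1_card big_mkcond /=; apply: eq_bigr => k _.
  by rewrite inE; case: eqP.
have tot : (\sum_ij #|K ij| = n * n)%N.
  under eq_bigr do rewrite cardK.
  rewrite exchange_big /=.
  transitivity (\sum_(k < n) n)%N; last by rewrite sum_nat_const card_ord.
  apply: eq_bigr => k _; rewrite -[in RHS](hM k) -sum1_card [RHS]big_mkcond /=.
  by apply: eq_bigr => ij _; rewrite inE; case: eqP.
have K1' : forall ij, #|K ij| = 1%N.
  have h0 : (\sum_ij (1 - #|K ij|) = 0)%N.
    rewrite sumnB // sum_nat_const card_prod card_ord tot.
    by rewrite muln1 subnn.
  move=> ij; move/eqP: h0; rewrite sum_nat_eq0 => /forallP /(_ ij) /=.
  by rewrite subn_eq0 => h; apply/eqP; rewrite eqn_leq K1 h.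
transitivity (\sum_(ij : 'I_n * 'I_n) \sum_(k < n) (if M ij.1 ij.2 == v k then f (v k) else 0)).
  apply: eq_bigr => ij _; rewrite -big_mkcond /=.
  transitivity (\sum_(k in K ij) f (M ij.1 ij.2)).
    by rewrite sumr_const K1'.
  by apply: eq_big => [k|k]; rewrite /K inE // => /eqP ->.
rewrite exchange_big /= mulr_sumr; apply: eq_bigr => k _.
rewrite -big_mkcond /=.
transitivity (\sum_(ij in [set ij : 'I_n * 'I_n | M ij.1 ij.2 == p + k%:R * q]) f (v k)).
  by apply: eq_bigl => ij; rewrite inE.
by rewrite sumr_const hM mulr_natl.
Qed.


Lemma householder (R : rcfType) m : exists H : 'M[R]_m.+2,
  H^T *m H = 1%:M /\ forall i, H i 0 = (Num.sqrt (m.+2)%:R)^-1.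
Proof.
set N : R := (m.+2)%:R.
set s := Num.sqrt N.
have N2 : 2 <= N by rewrite /N ler_nat.
have sN : s ^+ 2 = N by rewrite sqr_sqrtr //; lra.
have s0 : 0 <= s by apply: sqrtr_ge0.
have s1 : 1 < s by nra.
pose c : R := 2 * s ^+ 2 - 2 * s.
have c0 : c != 0 by rewrite /c; apply/eqP; nra.
pose w : 'cV[R]_m.+2 := \col_i (1 - s * (i == 0)%:R).
have wc : w^T *m w = c%:M.
  apply/matrixP => i j; rewrite !ord1 !mxE /= big_ord_recl /=.
  under eq_bigr do rewrite !mxE /=.
  have hm : (m.+1)%:R = s ^+ 2 - 1 :> R by rewrite sN /N -[(m.+2)%:R]natr1 addrK.
  rewrite !mxE /= !mulr0 !subr0 !mulr1 sumr_const card_ord hm mulr1n /c.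
  ring.
pose W := w *m w^T.
have WW : W *m W = c *: W.
  by rewrite /W mulmxA -[w *m w^T *m w]mulmxA wc mul_mx_scalar -scalemxAl.
pose t := 2 / c.
pose H := 1%:M - t *: W.
have HT : H^T = H.
  apply/matrixP => i j; rewrite !mxE !big_ord1 !mxE eq_sym; congr (_ - _ * _).
  by rewrite mulrC.
have tc : t * t * c = 2 * t by rewrite /t; field.
exists H; split.
  rewrite HT /H !mulmxBl !mulmxBr !mul1mx !mulmx1 -scalemxAl -scalemxAr WW !scalerA tc.
  have e : forall a : 'M[R]_(m.+2), a - (a + a) = - a.
    by move=> a; rewrite opprD addrA subrr sub0r.
  by rewrite mulrDl mul1r scalerDl e opprK subrK.
have sne0 : s != 0 by apply/eqP; lra.
have cne : 2 * s ^+ 2 - 2 * s != 0 by [].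
move=> i; rewrite /H !mxE big_ord1 !mxE /=.
case: (i == 0); rewrite /t /c /=.
  by rewrite !mulr1; field; rewrite ?cne ?sne0.
by rewrite mulr0 subr0 mul1r mulr1 sub0r; field; rewrite ?cne ?sne0.
Qed.


Lemma sum_lin (R : numFieldType) n (p q : R) :
  2 * \sum_(k < n) (p + k%:R * q) = 2 * n%:R * p + q * n%:R * (n%:R - 1).
Proof.
elim: n => [|n IH]; first by rewrite big_ord0; ring.
by rewrite big_ord_recr /= mulrDr IH -natr1; ring.
Qed.

Lemma sum_sq (R : numFieldType) n (p q : R) :
  6 * \sum_(k < n) (p + k%:R * q) ^+ 2 = 6 * n%:R * p ^+ 2 + 6 * p * q * n%:R * (n%:R - 1)
    + q ^+ 2 * n%:R * (n%:R - 1) * (2 * n%:R - 1).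
Proof.
elim: n => [|n IH]; first by rewrite big_ord0; ring.
by rewrite big_ord_recr /= mulrDr IH -natr1; ring.
Qed.

Lemma bsq_aux (R : comNzRingType) k (N q a t : R) :
 (N ^+ k.+1 * q ^+ k.+1 * a * t ^+ k) ^+ 2 = (N^+2 * q^+2 * a^+2) * (N^+2 * q^+2 * t ^+ 2) ^+ k.
Proof.
elim: k => [|k IH]; first by rewrite !expr1 !expr0; ring.
have -> : N ^+ k.+2 * q ^+ k.+2 * a * t ^+ k.+1 = (N * q * t) * (N ^+ k.+1 * q ^+ k.+1 * a * t ^+ k).
  rewrite [N ^+ k.+2]exprS [q ^+ k.+2]exprS [t ^+ k.+1]exprS.
  move: (N ^+ k.+1) (q ^+ k.+1) (t ^+ k) => x y z; ring.
rewrite exprMn IH [(N^+2 * q^+2 * t ^+ 2) ^+ k.+1]exprS.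
move: ((N^+2 * q^+2 * t ^+ 2) ^+ k) => z; ring.
Qed.

Lemma final_strict (R : realFieldType) m (N q2 r2 rho : R) : 0 < N -> 0 < q2 -> 0 < rho ->
  rho < r2 -> N = (m.+2)%:R ->
  (N * N * q2 * r2) * (N * N * q2 * rho) ^+ m.+1 < (N * q2 * (r2 + (N - 1) * rho)) ^+ m.+2.
Proof.
move=> N0 q0 rho0 lt eN.
pose Q := N * q2; pose a := N * rho; pose b := r2 + (N - 1) * rho.
have Q0 : 0 < Q by apply: mulr_gt0.
have a0 : 0 < a by apply: mulr_gt0.
have ab : a < b by rewrite /a /b; lra.
have hb := bern_strict _ m a b a0 ab.
rewrite -eN in hb.
have e1 : a ^+ m.+2 + N * (b - a) * a ^+ m.+1 = (N * r2) * a ^+ m.+1.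
  rewrite exprS; move: (a ^+ m.+1) => z; rewrite /a /b; ring.
rewrite e1 in hb.
have -> : N * N * q2 * r2 = Q * (N * r2) by rewrite /Q; ring.
have -> : N * N * q2 * rho = Q * a by rewrite /Q /a; ring.
have -> : N * q2 * (r2 + (N - 1) * rho) = Q * b by rewrite /Q /b.
rewrite [(Q * a) ^+ _]exprMn [(Q * b) ^+ _]exprMn [Q ^+ m.+2]exprS.
have Qm : 0 < Q ^+ m.+1 by apply: exprn_gt0.
have -> : Q * (N * r2) * (Q ^+ m.+1 * a ^+ m.+1) = (Q * Q ^+ m.+1) * ((N * r2) * a ^+ m.+1).
  by move: (Q ^+ m.+1) (a ^+ m.+1) => x y; ring.
by rewrite ltr_pM2l // mulr_gt0.
Qed.

Theorem mainTheorem9 (R : rcfType) (n : nat) (hn : (2 <= n)%N) (p q : R)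
  (hq : 0 < q) (M : 'M[R]_n)
  (hM : forall k : 'I_n,
     #|[set ij : 'I_n * 'I_n | M ij.1 ij.2 == p + k%:R * q]| = n) :
  let r := r_of n p q in
  let rho := rho_of R n in
  let sigma := sigma_of n p q in
  [/\ r ^+ 2 < rho -> `|\det M| <= Num.sqrt sigma ^+ n,
      r ^+ 2 = rho ->
        `|\det M| <= bound_of n p q /\ bound_of n p q = Num.sqrt sigma ^+ n
    & rho < r ^+ 2 ->
        `|\det M| <= bound_of n p q /\ bound_of n p q < Num.sqrt sigma ^+ n].
Proof.
case: n hn M hM => [|[|m]] // _ M hM.
move=> r rho sigma.
set N : R := (m.+2)%:R.
have hq0 : q != 0 by rewrite gt_eqF.
have N2 : 2 <= N by rewrite /N ler_nat.
have rhoE : rho = (N + 1) / 12%:R by [].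
have rE : r = p / q + (N - 1) / 2%:R by [].
have sigE : sigma = N * q ^+ 2 * (r ^+ 2 + (N - 1) * rho).
  by rewrite /sigma /sigma_of -/N -/r rhoE; field.
have rho0 : 0 < rho by rewrite rhoE; apply: divr_gt0; lra.
pose S := \sum_(ij : 'I_m.+2 * 'I_m.+2) M ij.1 ij.2.
pose F := \sum_(ij : 'I_m.+2 * 'I_m.+2) M ij.1 ij.2 ^+ 2.
have hS : S = N ^+ 2 * q * r.
  rewrite /S (count_sum _ _ _ _ hq0 _ hM (fun x => x)) -/N.
  have e := sum_lin _ m.+2 p q.
  have -> : \sum_(k < m.+2) (p + k%:R * q) = (2 * N * p + q * N * (N - 1)) / 2 by rewrite -e; field.
  by rewrite rE; field; apply: hq0.
have hF : F = N * sigma.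
  rewrite /F (count_sum _ _ _ _ hq0 _ hM (fun x => x ^+ 2)) -/N.
  have e6 := sum_sq _ m.+2 p q.
  have -> : \sum_(k < m.+2) (p + k%:R * q) ^+ 2 = (6 * N * p ^+ 2 + 6 * p * q * N * (N - 1)
    + q ^+ 2 * N * (N - 1) * (2 * N - 1)) / 6 by rewrite -e6; field.
  by rewrite sigE rhoE rE; field; apply: hq0.

have sig0 : 0 <= sigma.
  have : 0 <= F by apply: sumr_ge0 => ij _; apply: sqr_ge0.
  by rewrite hF pmulr_rge0 // /N ltr0Sn.
pose G := M^T *m M.
have trG : \tr G = F.
  rewrite /mxtrace /F /G; under eq_bigr do rewrite gram_diag.
  by rewrite exchange_big pair_bigA.
have detG : \det G = \det M ^+ 2 by rewrite /G det_mulmx det_tr expr2.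
have sqle : forall x y : R, 0 <= y -> x ^+ 2 <= y ^+ 2 -> `|x| <= y.
  by move=> x y y0 h; rewrite -sqrtr_sqr -[y]ger0_norm // -sqrtr_sqr; apply: ler_wsqrtr.
have sqs : (Num.sqrt sigma ^+ m.+2) ^+ 2 = sigma ^+ m.+2.
  by rewrite exprAC sqr_sqrtr.
have case1 : `|\det M| <= Num.sqrt sigma ^+ m.+2.
  apply: sqle; first by rewrite exprn_ge0 // sqrtr_ge0.
  rewrite sqs -detG.
  apply: le_trans (gram_hadamard _ _ _ M) _.
  have [h _] := @leif_AGM _ _ predT (fun j => G j j) (fun j _ => gram_diag_ge0 _ _ _ M j).
  move: h; rewrite cardT size_enum_ord -/N -/G.
  have -> : \sum_(i in predT) G i i = F by rewrite -trG.
  have NN0 : N != 0 by rewrite /N pnatr_eq0.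
  by rewrite hF (_ : N * sigma / N = sigma) // mulrAC divff // mul1r.
have NN0 : N != 0 by rewrite /N pnatr_eq0.
have N0 : 0 < N by rewrite /N ltr0Sn.
have k1 : (m.+1)%:R = N - 1 :> R by rewrite /N -[(m.+2)%:R]natr1 addrK.
have bsq : bound_of m.+2 p q ^+ 2 = (N ^+ 2 * q ^+ 2 * r ^+ 2) * (N ^+ 2 * q ^+ 2 * rho) ^+ m.+1.
  rewrite /bound_of -/N -/r -/rho (bsq_aux _ m.+1 N q `|r| (Num.sqrt rho)).
  by rewrite sqr_sqrtr ?ltW // real_normK ?num_real.
have b0 : 0 <= bound_of m.+2 p q.
  rewrite /bound_of; apply: mulr_ge0; last by apply: exprn_ge0; apply: sqrtr_ge0.
  apply: mulr_ge0 => //; apply: mulr_ge0; apply: exprn_ge0 => //; exact: ltW.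
have case23 : rho <= r ^+ 2 -> `|\det M| <= bound_of m.+2 p q.
  move=> rr; apply: sqle => //; rewrite bsq -detG.
  have [H [HH H0]] := householder R m.
  pose A := M *m H.
  have AA : A^T *m A = H^T *m G *m H by rewrite /A trmx_mul !mulmxA.
  have HHt : H *m H^T = 1%:M := mulmx1C HH.
  have detA : \det (A^T *m A) = \det G.
    by rewrite AA !det_mulmx mulrAC -[\det H^T * \det H]det_mulmx HH det1 mul1r.
  have trA : \tr (A^T *m A) = \tr G.
    by rewrite AA -mulmxA mxtrace_mulC -mulmxA HHt mulmx1.
  pose D := fun j => (A^T *m A) j j.
  pose X := D 0.
  have D0 : forall j, 0 <= D j by move=> j; apply: gram_diag_ge0.
  set s := Num.sqrt _ in H0.
  have sN : s ^+ 2 = N by rewrite sqr_sqrtr // ltW.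
  have s0 : s != 0 by apply/eqP => s0; move: sN; rewrite s0 expr0n /=; apply/eqP; rewrite eq_sym.
  have Ai0 : forall i, A i 0 = (\sum_j M i j) / s.
    by move=> i; rewrite /A mxE mulr_suml; apply: eq_bigr => j _; rewrite H0.
  have sumA : \sum_i A i 0 = S / s.
    under eq_bigr do rewrite Ai0.
    by rewrite -mulr_suml /S pair_bigA.
  have YX : N ^+ 2 * q ^+ 2 * r ^+ 2 <= X.
    have h := cs_sum _ _ (fun i => A i 0).
    rewrite sumA -/N expr_div_n sN hS -gram_diag -/D -/X in h.
    have e : (N ^+ 2 * q * r) ^+ 2 / N = N * (N ^+ 2 * q ^+ 2 * r ^+ 2).
      by field; apply/eqP; have := ler0n R m; lra.
    by rewrite e ler_pM2l in h.
  have X0 : 0 <= X by apply: D0.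
  have hsplit : \det G <= X * \prod_(j < m.+1) D (lift ord0 j).
    by rewrite -detA; apply: le_trans (gram_hadamard _ _ _ A) _; rewrite big_ord_recl.
  have trsplit : F = X + \sum_(j < m.+1) D (lift ord0 j).
    by rewrite -trG -trA /mxtrace big_ord_recl.
  have [h _] := @leif_AGM _ _ predT (fun j : 'I_m.+1 => D (lift ord0 j)) (fun j _ => D0 _).
  rewrite cardT size_enum_ord in h.
  have hE : \sum_(i in predT) D (lift ord0 i) = F - X.
    by rewrite trsplit [X + _]addrC addrK.
  rewrite hE k1 in h.
  apply: le_trans hsplit _.
  apply: le_trans (ler_wpM2l X0 h) _.
  have FX : 0 <= F - X by rewrite -hE; apply: sumr_ge0 => j _; apply: D0.
  set Y := N ^+ 2 * q ^+ 2 * r ^+ 2.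
  have Y0 : 0 <= Y by rewrite /Y; apply: mulr_ge0; [apply: mulr_ge0|]; apply: sqr_ge0.
  have FY : F - Y = (N - 1) * (N ^+ 2 * q ^+ 2 * rho).
    by rewrite hF sigE /Y; ring.
  have hk : F - X <= (m.+1)%:R * Y.
    rewrite k1; apply: le_trans (_ : F - Y <= _); first by rewrite lerD2l lerN2.
    rewrite FY; apply: ler_wpM2l; first lra.
    rewrite /Y; apply: ler_wpM2l => //.
    by apply: mulr_ge0; apply: sqr_ge0.
  have hm := mono_g _ m X Y F YX hk FX Y0.
  have km : 0 < (N - 1) ^+ m.+1 by apply: exprn_gt0; lra.
  have N1 : N - 1 != 0 by apply/eqP; lra.
  have -> : N ^+ 2 * q ^+ 2 * rho = (F - Y) / (N - 1).
    by rewrite FY [RHS]mulrAC divff // mul1r.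
  rewrite !expr_div_n !mulrA ler_pM2r ?invr_gt0 //.
split.
- by move=> _; exact: case1.
- move=> e; split; first by apply: case23; rewrite e.
  apply/eqP; rewrite -(eqrXn2 (_ : 0 < 2)%N) ?exprn_ge0 ?sqrtr_ge0 // bsq sqs; apply/eqP.
  have -> : sigma = N ^+ 2 * q ^+ 2 * rho by rewrite sigE e; ring.
  by rewrite e [in RHS]exprS.
- move=> lt; split; first by apply: case23; apply: ltW.
  have sqlt : forall x y : R, 0 <= x -> 0 <= y -> x ^+ 2 < y ^+ 2 -> x < y.
    move=> x y x0 y0 h; rewrite ltNge; apply/negP => yx.
    have : y * y <= x * x by apply: ler_pM.
    rewrite -!expr2; lra.
  apply: sqlt => //; first by rewrite exprn_ge0 ?sqrtr_ge0.
  rewrite bsq sqs sigE.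
  have q2 : 0 < q ^+ 2 by apply: exprn_gt0.
  have := final_strict _ m N (q ^+ 2) (r ^+ 2) rho N0 q2 rho0 lt erefl.
  by rewrite !expr2 !mulrA.
Qed.
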